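(* Let $1\le p\le\infty$, $E$ a Banach space, $Y$ a Banach lattice and $T:E\to Y$ a bounded linear operator. Then $T$ is positive $p$-majorizing if and only if $T$ is positive strongly $p$-summing.
   Context: $p^{\ast}$ is the conjugate exponent of $p$; for a finite family $(y_i^{\ast})$ in $Y^{\ast}$, $\|(y_i^{\ast})\|_{p^{\ast},\omega}=\sup_{y\in B_{Y}}\|(\langle y_i^{\ast},y\rangle)_i\|_{p^{\ast}}$. $T$ is positive $p$-majorizing if there is $C>0$ with $(\sum_{i=1}^n|\langle T(z_i),y_i^{\ast}\rangle|^{p^{\ast}})^{1/p^{\ast}}\le C\|(y_i^{\ast})_{i=1}^n\|_{p^{\ast},\omega}$ for all $n$, $z_i\in B_E$ and positive $y_i^{\ast}\in Y^{\ast}$. $T$ is positive strongly $p$-summing if there is $C>0$ with $\sum_{i=1}^n|\langle T(x_i),y_i^{\ast}\rangle|\le C(\sum_i\|x_i\|^p)^{1/p}\|(y_i^{\ast})_{i=1}^n\|_{p^{\ast},\omega}$ for all $n$, $x_i\in E$ and positive $y_i^{\ast}\in Y^{\ast}$. *)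

(* Defs.v *)
From HB Require Import structures.
From mathcomp Require Import all_boot all_order all_algebra.
From mathcomp Require Import all_classical all_reals all_analysis.
Set Implicit Arguments. Unset Strict Implicit. Unset Printing Implicit Defensive.
Import Order.TTheory GRing.Theory Num.Theory.
Import numFieldNormedType.Exports.
Local Open Scope classical_set_scope.
Local Open Scope ring_scope.

Section Defs.
Variable R : realType.

Definition lpnorm (q : \bar R) (n : nat) (a : 'I_n -> R) : R :=
  match q with
  | EFin r => (\sum_(i < n) `|a i| `^ r) `^ (r^-1)
  | EPInf => \big[Num.max/0]_(i < n) `|a i|
  | ENInf => 0
  end.

Definition conj_exp (p : \bar R) : \bar R :=
  match p with
  | EFin r => if r == 1 then +oo%E else (r / (r - 1))%:E
  | EPInf => 1%E
  | ENInf => -oo%E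
  end.

Definition bounded_linear (E F : normedModType R) (T : E -> F) : Prop :=
  (forall (a : R) (x y : E), T (a *: x + y) = a *: T x + T y) /\
  exists C : R, forall x : E, `|T x| <= C * `|x|.

Definition dual_elt (Y : normedModType R) (f : Y -> R) : Prop :=
  (forall (a : R) (x y : Y), f (a *: x + y) = a * f x + f y) /\
  exists C : R, forall y : Y, `|f y| <= C * `|y|.

Definition is_sup_ord (Y : Type) (le : Y -> Y -> Prop) (x y s : Y) : Prop :=
  le x s /\ le y s /\ (forall u, le x u -> le y u -> le s u).

(* le makes the normed space Y a normed vector lattice
   (together with completeness of Y, a Banach lattice) *)
Definition banach_lattice_order (Y : normedModType R) (le : Y -> Y -> Prop) : Prop :=
  (forall x, le x x) /\
  (forall x y, le x y -> le y x -> x = y) /\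
  (forall x y z, le x y -> le y z -> le x z) /\
  (forall x y z, le x y -> le (x + z) (y + z)) /\
  (forall (a : R) x y, 0 <= a -> le x y -> le (a *: x) (a *: y)) /\
  (forall x y, exists s, is_sup_ord le x y s) /\
  (forall x y ax ay, is_sup_ord le x (- x) ax -> is_sup_ord le y (- y) ay ->
      le ax ay -> `|x| <= `|y|).

Definition positive_functional (Y : normedModType R) (le : Y -> Y -> Prop) (f : Y -> R) :=
  forall y, le 0 y -> 0 <= f y.

Definition weak_norm (Y : normedModType R) (q : \bar R) (n : nat) (ys : 'I_n -> Y -> R) : R :=
  sup [set lpnorm q (fun i => ys i y) | y in [set y : Y | `|y| <= 1]].

Definition positive_p_majorizing (E Y : normedModType R) (le : Y -> Y -> Prop)
  (p : \bar R) (T : E -> Y) : Prop :=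
  exists2 C : R, 0 < C &
    forall (n : nat) (z : 'I_n -> E) (ys : 'I_n -> Y -> R),
      (forall i, `|z i| <= 1) ->
      (forall i, dual_elt (ys i) /\ positive_functional le (ys i)) ->
      lpnorm (conj_exp p) (fun i => ys i (T (z i)))
        <= C * weak_norm (conj_exp p) ys.

Definition positive_strongly_p_summing (E Y : normedModType R) (le : Y -> Y -> Prop)
  (p : \bar R) (T : E -> Y) : Prop :=
  exists2 C : R, 0 < C &
    forall (n : nat) (x : 'I_n -> E) (ys : 'I_n -> Y -> R),
      (forall i, dual_elt (ys i) /\ positive_functional le (ys i)) ->
      \sum_(i < n) `|ys i (T (x i))|
        <= C * lpnorm p (fun i => `|x i|) * weak_norm (conj_exp p) ys.

End Defs.

(* Main.v *)
Require Import Defs.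
From HB Require Import structures.
From mathcomp Require Import all_boot all_order all_algebra.
From mathcomp Require Import all_classical all_reals all_analysis.
From mathcomp Require Import ring lra.
Import Order.TTheory GRing.Theory Num.Theory.
Import numFieldNormedType.Exports.
Local Open Scope ring_scope.
Lemma holder_fin (R : realType) n (a b : 'I_n -> R) (p q : R) :
 (forall i, 0 <= a i) -> (forall i, 0 <= b i) -> 0 < p -> 0 < q -> p^-1 + q^-1 = 1 ->
 \sum_(i<n) a i * b i <= (\sum_(i<n) a i `^ p) `^ p^-1 * (\sum_(i<n) b i `^ q) `^ q^-1.
Proof.
elim: n a b => [|n IH] a b a0 b0 p0 q0 pq.
  by rewrite !big_ord0 mulr_ge0 ?powR_ge0.
rewrite !big_ord_recr /=.
set a' := fun i : 'I_n => a (widen_ord (leqnSn n) i).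
set b' := fun i : 'I_n => b (widen_ord (leqnSn n) i).
have := IH a' b' (fun i => a0 _) (fun i => b0 _) p0 q0 pq.
rewrite /a' /b' => H.
apply: le_trans (lerD H (lexx _)) _.
set A := \sum_(i < n) _ `^ p. set B := \sum_(i < n) _ `^ q.
have A0 : 0 <= A by apply: sumr_ge0 => i _; apply: powR_ge0.
have B0 : 0 <= B by apply: sumr_ge0 => i _; apply: powR_ge0.
have := hoelder2 (powR_ge0 A p^-1) (a0 ord_max) (powR_ge0 B q^-1) (b0 ord_max) p0 q0 pq.
rewrite -!powRrM !mulVf ?gt_eqF // !powRr1 //.
Qed.
Section H.
Variable R : realType.

Lemma bl0 (E F : normedModType R) (T : E -> F) : bounded_linear T -> T 0 = 0.
Proof.
move=> [h _]; have := h 1 0 0; rewrite !scale1r addr0 => e.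
by apply: (addrI (T 0)); rewrite addr0 -e.
Qed.

Lemma blZ (E F : normedModType R) (T : E -> F) a x : bounded_linear T -> T (a *: x) = a *: T x.
Proof. move=> hT; have := hT.1 a x 0; by rewrite addr0 bl0 // addr0. Qed.

Lemma du0 (Y : normedModType R) (f : Y -> R) : dual_elt f -> f 0 = 0.
Proof.
move=> [h _]; have := h 1 0 0; rewrite !scale1r addr0 mul1r => e.
by apply: (addrI (f 0)); rewrite addr0 -e.
Qed.

Lemma duZ (Y : normedModType R) (f : Y -> R) a x : dual_elt f -> f (a *: x) = a * f x.
Proof. move=> hf; have := hf.1 a x 0; by rewrite addr0 du0 // addr0. Qed.

Lemma lpnorm_ge0 q n (a : 'I_n -> R) : 0 <= lpnorm q a.
Proof.
case: q => [r||] //=; first exact: powR_ge0.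
by elim/big_ind: _ => // u v hu hv; rewrite le_max hu.
Qed.

Lemma weak_norm_ge0 (Y : normedModType R) q n (ys : 'I_n -> Y -> R) : 0 <= weak_norm q ys.
Proof.
rewrite /weak_norm.
set S := (X in sup X).
have [hs|hs] := pselect (has_sup S); last by rewrite sup_out.
apply: le_trans (lpnorm_ge0 q n (fun i => ys i 0)) _.
apply: sup_upper_bound => //; exists 0 => //=.
by rewrite normr0.
Qed.

End H.

Arguments duZ {R Y f}. Arguments du0 {R Y f}. Arguments bl0 {R E F T}. Arguments blZ {R E F T}.
Arguments lpnorm_ge0 {R}. Arguments weak_norm_ge0 {R Y}. Arguments holder_fin {R n a b p q}.

Theorem corollary3p6 (R : realType) (p : \bar R)
  (E Y : completeNormedModType R) (le : Y -> Y -> Prop) (T : E -> Y) :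
  (1%:E <= p)%E ->
  banach_lattice_order le ->
  bounded_linear T ->
  (positive_p_majorizing le p T <-> positive_strongly_p_summing le p T).
Proof.
move=> hp _ hT; split.
- move=> [C C0 HC]; exists C => // n x ys hys.
  pose z := fun i => `|x i|^-1 *: x i.
  have hz : forall i, `|z i| <= 1.
    move=> i; rewrite /z normrZ ger0_norm ?invr_ge0 //.
    have [->|h] := eqVneq `|x i| 0; first by rewrite invr0 mul0r.
    by rewrite mulVf.
  have hx : forall i, `|ys i (T (x i))| = `|x i| * `|ys i (T (z i))|.
    move=> i; rewrite /z blZ // (duZ _ _ (hys i).1) normrM ger0_norm ?invr_ge0 //.
    rewrite mulrA; have [h|h] := eqVneq `|x i| 0.
      by move/eqP: h; rewrite normr_eq0 => /eqP ->; rewrite bl0 // (du0 (hys i).1) normr0 !mulr0.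
    by rewrite mulfV // mul1r.
  have HCz := HC n z ys hz hys.
  have W0 := weak_norm_ge0 (conj_exp p) n ys.
  under eq_bigr do rewrite hx.
  move: hp HCz W0; clear HC; case: p => [r||] //=; last first.
  + move=> _ HCz W0.
    have e : \sum_(i < n) `|ys i (T (z i))| `^ 1 = \sum_(i < n) `|ys i (T (z i))|.
      by apply: eq_bigr => i _; rewrite powRr1.
    rewrite e invr1 powRr1 in HCz; last by apply: sumr_ge0 => i _.
    set L := \big[Num.max/0]_(i < n) `| `|x i| |.
    apply: le_trans (_ : \sum_(i < n) L * `|ys i (T (z i))| <= _).
      apply: ler_sum => i _; apply: ler_wpM2r => //.
      by rewrite /L -[X in X <= _]normr_id; apply: le_bigmax.
    rewrite -mulr_sumr [C * L]mulrC -mulrA ler_wpM2l //.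
    exact: (lpnorm_ge0 +oo%E n (fun i => `|x i|)).
  + rewrite lee_fin => r1.
    have [->|rn1] := eqVneq r 1.
    * rewrite ?eqxx => HCz W0.
      rewrite invr1 powRr1; last by apply: sumr_ge0 => i _; apply: powR_ge0.
      rewrite [X in C * X * _](eq_bigr (fun i => `|x i|)); last by move=> i _; rewrite powRr1 // normr_id.
      set M := \big[Num.max/0]_(i < n) `|ys i (T (z i))|.
      apply: le_trans (_ : \sum_(i < n) `|x i| * M <= _).
        apply: ler_sum => i _; apply: ler_wpM2l => //.
        by apply: le_bigmax.
      rewrite -mulr_suml [C * _]mulrC -mulrA ler_wpM2l //.
      by apply: sumr_ge0 => i _.
    * have r0 : 0 < r by apply: lt_le_trans r1.
      have r1' : 1 < r by rewrite lt_neqAle eq_sym rn1.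
      have q0 : 0 < r / (r - 1) by rewrite divr_gt0 // subr_gt0.
      have pq : r^-1 + (r / (r - 1))^-1 = 1.
        rewrite invf_div -{1}(mul1r r^-1) -mulrDl addrC subrK mulfV //.
        by rewrite gt_eqF.
      rewrite ?(negbTE rn1) => HCz W0.
      apply: le_trans (holder_fin (fun i => normr_ge0 (x i))
         (fun i => normr_ge0 (ys i (T (z i)))) r0 q0 pq) _.
      rewrite [X in _ <= C * (X `^ _) * _](eq_bigr (fun i => `|x i| `^ r)); last by move=> i _; rewrite normr_id.
      rewrite [C * _]mulrC -mulrA ler_wpM2l ?powR_ge0 //.
- move=> [C C0 HC]; exists C => // n z ys hz hys.
  have W0 := weak_norm_ge0 (conj_exp p) n ys.
  have T0 := bl0 hT.
  move: hp HC W0; case: p => [r||] //=; last first.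
  + move=> _ HC W0.
    rewrite invr1 powRr1; last by apply: sumr_ge0 => i _; apply: powR_ge0.
    rewrite (eq_bigr (fun i => `|ys i (T (z i))|)); last by move=> i _; rewrite powRr1.
    apply: le_trans (HC n z ys hys) _.
    rewrite -mulrA; apply: ler_wpM2l; first exact: ltW.
    rewrite -[X in _ <= X]mul1r; apply: ler_wpM2r => //.
    apply: bigmax_le => // i _; rewrite normr_id; exact: hz i.
  + rewrite lee_fin => r1.
    have [->|rn1] := eqVneq r 1.
    * rewrite ?eqxx => HC W0.
      apply: bigmax_le => [|j _]; first by rewrite mulr_ge0 // ltW.
      pose x := fun i : 'I_n => if i == j then z j else 0.
      have := HC n x ys hys.
      have -> : \sum_(i < n) `|ys i (T (x i))| = `|ys j (T (z j))|.
        rewrite (bigD1 j) //= /x eqxx big1 ?addr0 // => i /negbTE ->.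
        by rewrite T0 (du0 (hys i).1) normr0.
      move/le_trans; apply.
      rewrite -mulrA; apply: ler_wpM2l; first exact: ltW.
      rewrite -[X in _ <= X]mul1r; apply: ler_wpM2r => //.
      rewrite invr1 powRr1; last by apply: sumr_ge0 => i _; apply: powR_ge0.
      rewrite (bigD1 j) //= /x eqxx big1 ?addr0.
        by rewrite powRr1 // normr_id; exact: hz j.
      by move=> i /negbTE ->; rewrite !normr0 powR0 ?oner_neq0.
    * have r0 : 0 < r by apply: lt_le_trans r1.
      have r1' : 1 < r by rewrite lt_neqAle eq_sym rn1.
      rewrite ?(negbTE rn1).
      set q := r / (r - 1).
      have q0 : 0 < q by rewrite divr_gt0 // subr_gt0.
      have pq : r^-1 + q^-1 = 1.
        rewrite invf_div -{1}(mul1r r^-1) -mulrDl addrC subrK mulfV //.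
        by rewrite gt_eqF.
      have e : q * (r - 1) = r by rewrite /q divfK // subr_eq0.
      have e' : q * r = q + r by rewrite -[in RHS]e mulrBr mulr1 addrC subrK.
      have hq1 : (q - 1) * r = q by rewrite mulrBl mul1r e' addrK.
      move=> HC W0.
      pose a i := `|ys i (T (z i))|.
      pose b i := a i `^ (q - 1).
      pose x i := b i *: z i.
      have key : forall u : R, 0 <= u -> u `^ (q-1) * u = u `^ q.
        move=> u u0; rewrite -{2}(powRr1 u0) -powRD; first by rewrite subrK.
        by rewrite subrK (gt_eqF q0).
      have hS : \sum_(i < n) `|ys i (T (x i))| = \sum_(i < n) a i `^ q.
        apply: eq_bigr => i _; rewrite /x blZ // (duZ _ _ (hys i).1) normrM.
        by rewrite /b ger0_norm ?powR_ge0 // (key _ (normr_ge0 _)).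
      have hL : lpnorm r%:E (fun i => `|x i|) <= (\sum_(i < n) a i `^ q) `^ r^-1.
        rewrite /=; apply: ge0_ler_powR; first by rewrite invr_ge0 ltW.
        - by rewrite nnegrE; apply: sumr_ge0 => i _; apply: powR_ge0.
        - by rewrite nnegrE; apply: sumr_ge0 => i _; apply: powR_ge0.
        apply: ler_sum => i _.
        rewrite normr_id /x normrZ ger0_norm ?powR_ge0 //.
        apply: le_trans (_ : b i `^ r <= _); last by rewrite /b -powRrM hq1.
        apply: ge0_ler_powR; first exact: ltW.
        - by rewrite nnegrE mulr_ge0 ?powR_ge0.
        - by rewrite nnegrE powR_ge0.
        by rewrite ler_piMr ?powR_ge0.
      have := HC n x ys hys; rewrite hS => HS.
      set S := \sum_(i < n) a i `^ q in HS hL.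
      have S0 : 0 <= S by apply: sumr_ge0 => i _; apply: powR_ge0.
      rewrite -/(lpnorm q%:E (fun i => ys i (T (z i)))) /=.
      rewrite -/S.
      have [Se|Sn] := eqVneq S 0.
        by rewrite Se powR0 ?invr_neq0 ?gt_eqF // mulr_ge0 // ltW.
      have Sp : 0 < S `^ r^-1 by apply: powR_gt0; rewrite lt_neqAle eq_sym Sn.
      rewrite -(ler_pM2l Sp) -powRD; last by rewrite Sn implybT.
      rewrite pq powRr1 //.
      apply: le_trans HS _.
      apply: (@le_trans _ _ (C * S `^ r^-1 * weak_norm (r / (r - 1))%:E ys)).
        apply: ler_wpM2r => //; apply: ler_wpM2l; [exact: ltW| exact: hL].
      by rewrite [C * _]mulrC -mulrA.
Qed.
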